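(* The family $\mathcal{T}_n \subset 2^{\binom{[n]}{2}}$ of all labelled spanning trees of $K_n$ (identified with their edge sets) is $(n/2, n-1)$-spread.
   Context: For $\mathcal{F}\subset 2^{[m]}$ and $X\subset[m]$, $\mathcal{F}(X):=\{A\setminus X : A\in\mathcal{F},\ X\subset A\}$. For $r>1$, $\mathcal{F}$ is $r$-spread if $|\mathcal{F}(X)|\le r^{-|X|}|\mathcal{F}|$ for all $X\subset[m]$. $\mathcal{F}$ is $(r,t)$-spread if for every $T\subset[m]$ with $|T|\le t$ the family $\mathcal{F}(T)$ is $r$-spread, i.e. for every such $T$ and every $U$ with $T\subseteq U\subseteq[m]$, $|\mathcal{F}(U)|\le r^{-(|U|-|T|)}|\mathcal{F}(T)|$. Here $[m]$ is the ground set $\binom{[n]}{2}$ of edges of $K_n$. *)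

(* Defs.v *)
From mathcomp Require Import all_boot all_order all_algebra.
Set Implicit Arguments. Unset Strict Implicit. Unset Printing Implicit Defensive.
Import Order.TTheory GRing.Theory Num.Theory.

Definition edge (n : nat) := {e : {set 'I_n} | #|e| == 2}.

Definition adj (n : nat) (E : {set edge n}) : rel 'I_n :=
  fun u v => [exists e in E, val e == [set u; v]].

Definition connectedE (n : nat) (E : {set edge n}) : bool :=
  [forall u : 'I_n, forall v : 'I_n, connect (adj E) u v].

(* No cycle: no sequence of k >= 3 distinct vertices v0 ... v(k-1) with
   consecutive vertices adjacent and v(k-1) adjacent to v0.  (A sequence of
   distinct vertices has length <= n, so k ranges over 'I_n.+1.) *)
Definition acyclicE (n : nat) (E : {set edge n}) : bool :=
  [forall k : 'I_n.+1, forall s : k.-tuple 'I_n,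
     (3 <= k) && uniq s ==> ~~ cycle (adj E) s].

Definition is_spanning_tree (n : nat) (E : {set edge n}) : bool :=
  connectedE E && acyclicE E.

Definition spanning_trees (n : nat) : {set {set edge n}} :=
  [set E | is_spanning_tree E].

Definition link (T : finType) (F : {set {set T}}) (X : {set T}) : {set {set T}} :=
  [set A :\: X | A in [set A in F | X \subset A]].

Local Open Scope ring_scope.

Definition rspread (T : finType) (r : rat) (F : {set {set T}}) : Prop :=
  forall X : {set T}, (#|link F X|)%:R <= r ^- #|X| * (#|F|)%:R.

Definition rt_spread (T : finType) (r : rat) (t : nat) (F : {set {set T}}) : Prop :=
  forall S : {set T}, (#|S| <= t)%N -> rspread r (link F S).

(* Main.v *)
Require Import Defs.
From mathcomp Require Import all_boot all_order all_algebra.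
Set Implicit Arguments. Unset Strict Implicit. Unset Printing Implicit Defensive.

Section G.
Variable n : nat.
Implicit Types (A B E H T U S X : {set edge n}) (x y u v w a b c : 'I_n) (e g f : edge n).

Lemma adjC E : symmetric (adj E).
Proof. by move=> x y; rewrite /adj setUC. Qed.

Lemma connC E x y : connect (adj E) x y = connect (adj E) y x.
Proof. exact: (sym_connect_sym (adjC E)). Qed.

Lemma set2_inj (a b c d : 'I_n) : [set a; b] = [set c; d] ->
  (a = c /\ b = d) \/ (a = d /\ b = c).
Proof.
move=> h.
have ha : a \in [set c; d] by rewrite -h !inE eqxx.
have hb : b \in [set c; d] by rewrite -h !inE eqxx orbT.
have hc : c \in [set a; b] by rewrite h !inE eqxx.
have hd : d \in [set a; b] by rewrite h !inE eqxx orbT.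
move: ha hb hc hd; rewrite !inE => /orP[]/eqP-> /orP[]/eqP-> /orP[]/eqP hc /orP[]/eqP hd; subst; auto.
Qed.

Lemma connect_split E H p q :
  (forall a b, adj E a b -> adj H a b \/ [set a; b] = [set p; q]) ->
  forall x y, connect (adj E) x y ->
  [\/ connect (adj H) x y, connect (adj H) x p /\ connect (adj H) q y
    | connect (adj H) x q /\ connect (adj H) p y].
Proof.
move=> hEH x y /connectP [s]; elim: s x => [|z s IH] x /=.
  by move=> _ ->; apply: Or31; exact: connect0.
move=> /andP [hxz hp] hy; have := IH z hp hy.
case: (hEH _ _ hxz) => [hH | /set2_inj [[-> ->]|[-> ->]]].
- case=> [h|[h1 h2]|[h1 h2]].
  + by apply: Or31; apply: connect_trans (connect1 hH) h.
  + by apply: Or32; split => //; apply: connect_trans (connect1 hH) h1.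
  + by apply: Or33; split => //; apply: connect_trans (connect1 hH) h1.
- case=> [h|[h1 h2]|[h1 h2]].
  + by apply: Or32; split => //; exact: connect0.
  + by apply: Or32.
  + by apply: Or31.
- case=> [h|[h1 h2]|[h1 h2]].
  + by apply: Or33; split => //; exact: connect0.
  + by apply: Or31.
  + by apply: Or33.
Qed.

Lemma adjP E a b : reflect (exists2 f, f \in E & val f = [set a; b]) (adj E a b).
Proof.
apply: (iffP exists_inP) => [[f hf /eqP h]|[f hf h]]; exists f => //; exact/eqP.
Qed.

Lemma adj_avoid E g c a b : c \in val g -> c != a -> c != b ->
  adj E a b -> adj (E :\ g) a b.
Proof.
move=> hc ha hb /adjP [f hf hv]; apply/adjP; exists f => //.
rewrite !inE hf andbT; apply/eqP => fg; subst f.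
by move: hc; rewrite hv !inE (negbTE ha) (negbTE hb).
Qed.

Lemma path_avoid E g c a q : c \in val g -> c \notin a :: q ->
  path (adj E) a q -> path (adj (E :\ g)) a q.
Proof.
move=> hc; elim: q a => [|b q IH] a //=.
rewrite !inE negb_or => /andP[ha]; rewrite negb_or => /andP[hb hq] /andP[hab hp].
rewrite (adj_avoid hc ha hb hab) /=; apply: IH => //; by rewrite inE negb_or hb.
Qed.

Definition bridges E := forall g x y, g \in E -> val g = [set x; y] ->
  ~~ connect (adj (E :\ g)) x y.

Lemma edge_neq (g : edge n) x y : val g = [set x; y] -> x != y.
Proof. by move=> h; have := valP g; rewrite h cards2; case: (x != y). Qed.

Lemma acyclic_bridges E : acyclicE E -> bridges E.
Proof.
move=> hac g x y hg hv; have xy := edge_neq hv.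
apply/negP => /connectP [p0 hp0 hy].
move: hy; case: (shortenP hp0) => p' hp' hu _ hy; move: hy.
case: p' hp' hu => [|z [|z' r]] /=.
- by move=> _ _ hxy; rewrite hxy eqxx in xy.
- rewrite andbT => /adjP [f]; rewrite !inE => /andP [hfg hf] hfv _ hzy; subst z.
  by move: hfg; rewrite -hv in hfv; rewrite (val_inj hfv) eqxx.
- move=> hpath huniq hly.
  set s := [:: x, z, z' & r].
  have hs : size s < n.+1.
    have hc : #|s| = size s by apply/card_uniqP.
    by have := max_card (mem s); rewrite card_ord hc.
  have := hac; move/forallP/(_ (Ordinal hs))/forallP/(_ (in_tuple s)).
  rewrite /= huniq /= => /negP; apply.
  rewrite /cycle /=.
  have hsub : subrel (adj (E :\ g)) (adj E).
    by move=> a b /adjP [f]; rewrite inE => /andP [_ hf] hfv; apply/adjP; exists f.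
  have hP : path (adj E) x [:: z, z' & r] := sub_path hsub (hpath : path (adj (E :\ g)) x [:: z, z' & r]).
  have := rcons_path (adj E) x [:: z, z' & r] x; rewrite /= => ->.
  move: hP; rewrite /= => ->; rewrite -hly adjC; apply/adjP; by exists g.
Qed.

Lemma bridges_acyclic E : bridges E -> acyclicE E.
Proof.
move=> hb; apply/forallP => k; apply/forallP => t; apply/implyP => /andP [hk hu].
case: t hk hu => s /= /eqP <-.
case: s => [|x [|x1 [|z r]]] //= _ hu.
rewrite /cycle /=; apply/negP => /andP [hxx1 hp].
case/adjP: hxx1 => g hg hgv.
move: hu; rewrite !inE !negb_or => /and4P [/and3P [hx1 hxz hxr] /andP[hx1z hx1r] hzr _].
have := hb g x x1 hg hgv; rewrite connC => /negP; apply.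
apply/connectP; exists [:: z & rcons r x]; last by rewrite /= last_rcons.
move: hp; rewrite /= => /andP [h1 h2].
rewrite (adj_avoid (c := x)) ?hgv ?inE ?eqxx //=.
apply: (path_avoid (c := x1)) => //; first by rewrite hgv !inE eqxx orbT.
rewrite inE mem_rcons !inE !negb_or hx1z hx1r /= andbT; by rewrite eq_sym.
Qed.

Lemma adj_sub A B : A \subset B -> subrel (adj A) (adj B).
Proof. move=> hAB a b /adjP [f hf hv]; apply/adjP; exists f => //; exact: (subsetP hAB). Qed.

Lemma conn_sub A B x y : A \subset B -> connect (adj A) x y -> connect (adj B) x y.
Proof. move=> hAB; apply: connect_sub => a b h; apply: connect1; exact: adj_sub h. Qed.

Definition Ed u w := [set f : edge n | val f == [set u; w]].

Lemma adj_Ed A u w a b : adj (A :|: Ed u w) a b -> adj A a b \/ [set a; b] = [set u; w].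
Proof.
move=> /adjP [f]; rewrite !inE => /orP [hf|/eqP hf] hv; last by right; rewrite -hv -hf.
by left; apply/adjP; exists f.
Qed.

Lemma mkedge_proof u w : u != w -> #|[set u; w]| == 2.
Proof. by rewrite cards2 => ->. Qed.

Lemma adj_Ed_uw A u w : u != w -> adj (A :|: Ed u w) u w.
Proof.
move=> uw; apply/adjP; exists (exist _ [set u; w] (mkedge_proof uw)) => //.
by rewrite !inE eqxx orbT.
Qed.

Lemma dich T e u v : connectedE T -> e \in T -> val e = [set u; v] ->
  forall w, connect (adj (T :\ e)) u w \/ connect (adj (T :\ e)) v w.
Proof.
move=> hc he hv w.
have := (forallP ((forallP hc) u)) w.
move/(connect_split (H := T :\ e) (p := u) (q := v)).
case.
- move=> a b /adjP [f hf hfv]; case: (eqVneq f e) => [fe|fe].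
    by right; rewrite -hfv -hv fe.
  by left; apply/adjP; exists f => //; rewrite !inE fe.
- by left.
- by case => _ ?; right.
- by case => _ ?; left.
Qed.

Lemma exchange T e u v w : is_spanning_tree T -> e \in T -> val e = [set u; v] ->
  ~~ connect (adj (T :\ e)) u w -> is_spanning_tree ((T :\ e) :|: Ed u w).
Proof.
move=> /andP [hc hac] he hv huw.
have hb := acyclic_bridges hac.
set A := T :\ e; set T' := A :|: Ed u w.
have uw : u != w by apply: contraNneq huw => <-; exact: connect0.
have hvw : connect (adj A) v w by case: (dich hc he hv w) => // h; rewrite h in huw.
have AT' : A \subset T' by apply: subsetUl.
have conn : forall a, connect (adj T') u a.
  move=> a; case: (dich hc he hv a) => h; first exact: conn_sub AT' h.
  apply: connect_trans (connect1 (adj_Ed_uw A uw)) _.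
  apply: connect_trans (conn_sub AT' h); rewrite connC; exact: conn_sub AT' hvw.
apply/andP; split.
  by apply/forallP => a; apply/forallP => b; apply: connect_trans (conn b); rewrite connC.
apply: bridges_acyclic => g x y hg hgv; apply/negP => hxy.
case: (boolP (g \in Ed u w)) => hgE.
- have hsub : subrel (adj (T' :\ g)) (adj A).
    move=> a b /adjP [f]; rewrite !inE => /andP [hfg /orP [hf|hf]] hfv.
      by apply/adjP; exists f => //; rewrite !inE.
    move: hgE hf; rewrite !inE => /eqP h1 /eqP h2.
    by move: hfg; rewrite (val_inj (etrans h2 (esym h1))) eqxx.
  have : connect (adj A) x y by apply: connect_sub hxy => a b /hsub; apply: connect1.
  move: hgE; rewrite inE hgv => /eqP /set2_inj [[-> ->]|[-> ->]].
    by move=> h; rewrite h in huw.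
  by rewrite connC => h; rewrite h in huw.
- have hgA : g \in A by move: hg; rewrite inE (negbTE hgE) orbF.
  have hgT : g \in T by move: hgA; rewrite inE => /andP [].
  have hAg : A :\ g \subset T :\ g.
    by apply/subsetP => f; rewrite !inE => /and3P [-> _ ->].
  have hAgA : A :\ g \subset A by apply: subD1set.
  have hxyA : connect (adj A) x y by apply: connect1; apply/adjP; exists g.
  case: (connect_split (E := T' :\ g) (H := A :\ g) (p := u) (q := w) _ hxy).
  + move=> a b /adjP [f]; rewrite !inE => /andP [hfg /orP [hf|/eqP hf]] hfv.
      by left; apply/adjP; exists f => //; rewrite !inE hfg.
    by right; rewrite -hfv -hf.
  + by move=> h; have := hb g x y hgT hgv; rewrite (conn_sub hAg h).
  + case=> /(conn_sub hAgA) h1 /(conn_sub hAgA) h2.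
    move: huw; rewrite connC in h1; rewrite connC in h2.
    by rewrite (connect_trans h1 (connect_trans hxyA (h2 : connect (adj A) y w) )) .
  + case=> /(conn_sub hAgA) h1 /(conn_sub hAgA) h2.
    by move: huw; rewrite (connect_trans h2 (connect_trans _ h1)) //; rewrite connC.
Qed.


Lemma side T e u v w1 w2 H : is_spanning_tree T -> e \in T -> val e = [set u; v] ->
  ~~ connect (adj (T :\ e)) u w1 -> H \subset T :\ e ->
  (forall a b, adj (T :\ e) a b -> adj H a b \/ [set a; b] = [set u; w2]) ->
  connect (adj H) v w1.
Proof.
move=> /andP [hc hac] he hv hn hH hsp.
have hvw : connect (adj (T :\ e)) v w1 by case: (dich hc he hv w1) => // h; rewrite h in hn.
case: (connect_split hsp hvw) => // [[h1 h2]|[h1 h2]].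
- move: hn; rewrite connC in h1.
  by rewrite (connect_trans (conn_sub hH h1) hvw).
- by move: hn; rewrite (conn_sub hH h2).
Qed.

Definition phi e u (p : {set edge n} * 'I_n) := (p.1 :\ e) :|: Ed u p.2.
Definition Qs e u := [set p : {set edge n} * 'I_n |
  [&& is_spanning_tree p.1, e \in p.1 & ~~ connect (adj (p.1 :\ e)) u p.2]].

Lemma disj_Ed A u w f : ~~ connect (adj A) u w -> f \in A -> f \notin Ed u w.
Proof.
move=> hn hf; apply/negP; rewrite inE => /eqP hv; move: hn.
by rewrite connect1 //; apply/adjP; exists f.
Qed.

Lemma phi_inj e u v : val e = [set u; v] -> {in Qs e u &, injective (phi e u)}.
Proof.
move=> hv [T1 w1] [T2 w2]; rewrite !inE /phi /= => /and3P [ht1 he1 hn1] /and3P [ht2 he2 hn2] heq.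
set T' := (T1 :\ e) :|: Ed u w1 in heq.
have hA1 : T1 :\ e = [set f in T' | f \notin Ed u w1].
  apply/setP => f; rewrite !inE; case: (boolP ((f != e) && (f \in T1))) => hf /=.
    by have := disj_Ed hn1 (f := f); rewrite !inE hf => /(_ isT) ->.
  by case: (_ == _).
have hA2 : T2 :\ e = [set f in T' | f \notin Ed u w2].
  rewrite heq; apply/setP => f; rewrite !inE; case: (boolP ((f != e) && (f \in T2))) => hf /=.
    by have := disj_Ed hn2 (f := f); rewrite !inE hf => /(_ isT) ->.
  by case: (_ == _).
case: (eqVneq w1 w2) => [hw|hw].
  subst w2; congr (_, _).
  by rewrite -(setD1K he1) -(setD1K he2) hA1 hA2.
exfalso.
set H := [set f in T' | (f \notin Ed u w1) && (f \notin Ed u w2)].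
have hH1 : H \subset T1 :\ e by rewrite hA1; apply/subsetP => f; rewrite !inE => /andP [-> /andP [-> _]].
have hH2 : H \subset T2 :\ e by rewrite hA2; apply/subsetP => f; rewrite !inE => /andP [-> /andP [_ ->]].
have c1 : connect (adj H) v w1.
  apply: (side (w2 := w2) ht1 he1 hv hn1 hH1) => a b /adjP [f hf hfv].
  case: (boolP (f \in Ed u w2)) => hf2.
    by right; rewrite -hfv; move: hf2; rewrite inE => /eqP.
  left; apply/adjP; exists f => //; move: hf hf2; rewrite hA1 !inE. by move=> /andP [-> ->] ->.
have c2 : connect (adj H) v w2.
  apply: (side (w2 := w1) ht2 he2 hv hn2 hH2) => a b /adjP [f hf hfv].
  case: (boolP (f \in Ed u w1)) => hf2.
    by right; rewrite -hfv; move: hf2; rewrite inE => /eqP.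
  left; apply/adjP; exists f => //; move: hf hf2; rewrite hA2 !inE; by move=> /andP [-> ->] ->.
have uw2 : u != w2 by apply: contraNneq hn2 => <-; exact: connect0.
have huw2 : adj (T1 :\ e) u w2.
  pose g2 : edge n := exist _ [set u; w2] (mkedge_proof uw2).
  have hin : g2 \in T' by rewrite heq !inE eqxx orbT.
  apply/adjP; exists g2 => //.
  rewrite hA1 inE hin /= inE /=.
  apply/eqP => /set2_inj [[_ h]|[h1 h2]].
    by rewrite h eqxx in hw.
  by have := uw2; rewrite h2 eqxx.
move: hn1; rewrite (connect_trans (connect1 huw2)) //.
apply: (conn_sub hH1); apply: connect_trans c1; by rewrite connC.
Qed.


Definition Nt (U : {set edge n}) :=
  #|[set E : {set edge n} | is_spanning_tree E && (U \subset E)]|.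

Lemma count_side U e u v (R : {set {set edge n} * 'I_n}) :
  val e = [set u; v] -> e \notin U ->
  R \subset Qs e u -> {in R, forall p : {set edge n} * 'I_n, U \subset p.1} -> #|R| <= Nt U.
Proof.
move=> hv heU hRQ hRU.
rewrite -(card_in_imset (f := phi e u)); last first.
  by move=> p q hp hq; apply: (phi_inj hv); apply: (subsetP hRQ).
apply: subset_leq_card; apply/subsetP => E /imsetP [[T w] hp ->].
have := subsetP hRQ _ hp; rewrite inE /= => /and3P [ht he hn].
have hU := hRU _ hp; rewrite /= in hU.
rewrite inE (exchange ht he hv hn) /=.
apply/subsetP => f hf; rewrite /phi /= !inE (subsetP hU _ hf) andbT.
by apply/orP; left; apply: contraNneq heU => <-.
Qed.

Lemma key U e : e \notin U -> Nt (e |: U) * n <= 2 * Nt U.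
Proof.
move=> heU.
have := valP e; case/cards2P => u [v [uv hv]].
set Tr := [set E : {set edge n} | is_spanning_tree E && (e |: U \subset E)].
set P := setX Tr [set: 'I_n].
have hP : #|P| = Nt (e |: U) * n by rewrite cardsX cardsT card_ord.
set B := [set p : {set edge n} * 'I_n | ~~ connect (adj (p.1 :\ e)) u p.2].
rewrite -hP -(cardsID B P) mul2n -addnn.
have hPU : forall p, p \in P -> [&& is_spanning_tree p.1, e \in p.1 & U \subset p.1].
  move=> [T w]; rewrite !inE /= andbT => /andP [-> ].
  by rewrite subUset sub1set => /andP [-> ->].
apply: leq_add.
- apply: (count_side hv heU).
    apply/subsetP => p; rewrite inE => /andP [hp]; rewrite inE => hB.
    by have /and3P [ht he _] := hPU p hp; rewrite inE ht he hB.
  by move=> p; rewrite inE => /andP [/hPU /and3P [_ _ ->]].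
- have hv' : val e = [set v; u] by rewrite hv setUC.
  apply: (count_side hv' heU).
    apply/subsetP => p; rewrite inE => /andP [hB hp]; move: hB; rewrite inE => hB.
    have /and3P [ht he _] := hPU p hp; rewrite inE ht he /=.
    rewrite negbK in hB; apply/negP => hvw.
    move: ht => /andP [_ /acyclic_bridges hb].
    have := hb e u v he hv; rewrite (connect_trans hB) //; by rewrite connC.
  by move=> p; rewrite inE => /andP [_ /hPU /and3P [_ _ ->]].
Qed.


Lemma spread_nat S k : forall X, #|X| = k -> [disjoint S & X] ->
  (Nt (S :|: X) * n ^ k <= 2 ^ k * Nt S)%N.
Proof.
elim: k => [|k IH] X hX hd.
  by move/cards0_eq: hX => ->; rewrite setU0 expn0 muln1 mul1n.
have : (0 < #|X|)%N by rewrite hX.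
case/card_gt0P => x hx.
have hX' : #|X :\ x| = k by move: hX; rewrite (cardsD1 x X) hx add1n => -[].
have hd' : [disjoint S & X :\ x].
  by apply: disjointWr hd; apply: subD1set.
have hxS : x \notin S :|: (X :\ x).
  rewrite !inE eqxx /= orbF; apply/negP => hxS.
  by rewrite (disjointFr hd hxS) in hx.
have hU : S :|: X = x |: (S :|: (X :\ x)).
  apply/setP => y; rewrite !inE; case: (eqVneq y x) => [->|_]; rewrite ?hx ?orbT //=.
have := key hxS; rewrite -hU => hk.
have := IH _ hX' hd' => hi.
have e1 : (Nt (S :|: X) * n ^ k.+1 = (Nt (S :|: X) * n) * n ^ k)%N by rewrite expnS mulnA.
have e2 : (2 ^ k.+1 * Nt S = 2 * (2 ^ k * Nt S))%N by rewrite expnS mulnA.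
rewrite e1 e2; apply: leq_trans (leq_mul hk (leqnn _)) _.
by rewrite -mulnA leq_mul2l hi orbT.
Qed.

End G.

Lemma link_card (T : finType) (F : {set {set T}}) S :
  #|link F S| = #|[set A in F | S \subset A]|.
Proof.
apply: card_in_imset => A B; rewrite !inE => /andP [_ hA] /andP [_ hB] h.
apply/setP => x; case: (boolP (x \in S)) => hx.
  by rewrite (subsetP hA _ hx) (subsetP hB _ hx).
by have := congr1 (fun C : {set T} => x \in C) h; rewrite /= !inE hx.
Qed.

Lemma link2_card (T : finType) (F : {set {set T}}) S X :
  (#|link (link F S) X| <= if [disjoint S & X] then #|[set A in F | S :|: X \subset A]| else 0)%N.
Proof.
have h0 := leq_imset_card (fun A => A :\: X) [set B in link F S | X \subset B].
apply: (leq_trans h0).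
set M := [set B in link F S | X \subset B].
have hM : forall B, B \in M -> exists2 A, A \in [set A in F | S :|: X \subset A] & B = A :\: S /\ [disjoint S & X].
  move=> B; rewrite inE => /andP [/imsetP [A]]; rewrite inE => /andP [hA hSA] -> hX.
  exists A; first by rewrite inE hA subUset hSA (subset_trans hX) // subsetDl.
  split => //; rewrite disjoints_subset; apply/subsetP => x hxS; rewrite inE; apply/negP => hxX.
  by have := subsetP hX _ hxX; rewrite inE hxS.
case: ifP => hd.
  apply: leq_trans _ (leq_imset_card (fun A => A :\: S) [set A in F | S :|: X \subset A]); apply: subset_leq_card.
  by apply/subsetP => B /hM [A hA [-> _]]; apply: imset_f.
rewrite leqn0 cards_eq0; apply/eqP; apply/setP => B; rewrite [in RHS]inE.
by apply/negbTE/negP => /hM [A _ [_]]; rewrite hd.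
Qed.

Unset Implicit Arguments.
Local Open Scope ring_scope.
Import Order.TTheory GRing.Theory Num.Theory.

Theorem lemma4p3 (n : nat) (hn : (2 < n)%N) :
  rt_spread ((n%:R : rat) / 2) n.-1 (spanning_trees n).
Proof.
move=> S _ X.
have hN : forall U : {set edge n}, #|[set A in spanning_trees n | U \subset A]| = Nt U.
  by move=> U; apply: eq_card => A; rewrite !inE.
have hL := link2_card (spanning_trees n) S X.
rewrite (link_card (spanning_trees n) S) hN.
have hn0 : (0 : rat) < n%:R by rewrite ltr0n; apply: leq_trans hn.
case: ifP hL => hd hL; last first.
  move: hL; rewrite leqn0 => /eqP ->.
  by rewrite mulr_ge0 // ?invr_ge0 ?exprn_ge0 ?divr_ge0 // ltW.
rewrite hN in hL.
have := spread_nat (erefl #|X|) hd => hs.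
rewrite expr_div_n invf_div mulrAC ler_pdivlMr ?exprn_gt0 //.
apply: le_trans (_ : (Nt (S :|: X))%:R * n%:R ^+ #|X| <= _).
  by apply: ler_wpM2r; [rewrite exprn_ge0 // ltW | rewrite ler_nat].
have -> : (2 : rat) = 2%:R by [].
by rewrite -natrX -natrX -natrM -natrM ler_nat.
Qed.
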